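(* Let $C$ be a subscription subtask with worst-case response time $R_C$ that is the only subscriber of a topic, and let its parents $A, B, \dots$ (the subtasks publishing to that topic) have worst-case response times $R_A, R_B, \dots$. Suppose the task set containing $A, B, C, \dots$ is strictly periodic, the parents' periods are harmonic, and the phase shift is sufficient in the following sense: for each pair of parents $A, B$, $$t_{RA} + R_A + R_C \leq t_{RB}, \qquad t_{RB} + R_B + R_C \leq t_{RA} + T_A,$$ where $t_{Rx}$ denotes a release time of $x$, these occurring at the time points $\phi_x + kT_x$, $k \in \mathbb{N}$, with $\phi_x$ the phase and $T_x$ the period of $x$. Then the message queue for that subscription's topic never contains more than one message.
   Context: Setting: a ROS~2 application on a single processor in which subtasks (callbacks) communicate via publish-subscribe topics. Each execution of a parent publishes one message to the topic, which is enqueued in the subscription's message queue and releases one job of the subscription $C$ immediately when the parent completes; that message is removed from the queue when the corresponding job of $C$ is executed. The response time of a job is the time from its release to its completion; $R_x$ is an upper bound on the response time of jobs of $x$. *)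

(* Defs.v *)
From mathcomp Require Import all_boot all_order all_algebra.
Set Implicit Arguments. Unset Strict Implicit. Unset Printing Implicit Defensive.
Import Order.TTheory GRing.Theory Num.Theory.
Local Open Scope ring_scope.

Section Defs.
Variables (R : realFieldType) (P : Type).

Definition release (phi T : P -> R) (x : P) (k : nat) : R := phi x + k%:R * T x.

Definition is_release (phi T : P -> R) (x : P) (t : R) : Prop :=
  exists k : nat, t = release phi T x k.

Definition harmonic (T : P -> R) : Prop :=
  forall x y : P, exists n : nat, T y = n%:R * T x \/ T x = n%:R * T y.

Definition sufficient_phase_shift (phi T Rp : P -> R) (RC : R) : Prop :=
  forall A B : P, A <> B ->
    exists tA tB : R, is_release phi T A tA /\ is_release phi T B tB /\
      tA + Rp A + RC <= tB /\ tB + Rp B + RC <= tA + T A.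

(* The message published by job k of parent x is in the queue at time t:
   it was enqueued at the completion time fin x k of that job, and it is
   removed at time rem x k (when the corresponding job of C executes). *)
Definition in_queue (fin rem : P -> nat -> R) (t : R) (x : P) (k : nat) : Prop :=
  fin x k <= t /\ t < rem x k.

End Defs.

(* Main.v *)
From Stdlib Require Import Classical.
Require Import Defs.
From mathcomp Require Import all_boot all_order all_algebra.
From mathcomp Require Import ring lra.
Import Order.TTheory GRing.Theory Num.Theory.
Local Open Scope ring_scope.

Lemma nat_eq_of_bound (R : realFieldType) (T : R) (a b : nat) :
  0 < T -> - T < (a%:R - b%:R) * T -> (a%:R - b%:R) * T < T -> a = b.
Proof.
move=> hT h1 h2; case: (ltngtP a b) => // hab.
- have : (a.+1)%:R <= b%:R :> R by rewrite ler_nat.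
  rewrite -natr1 => h; exfalso; nra.
- have : (b.+1)%:R <= a%:R :> R by rewrite ler_nat.
  rewrite -natr1 => h; exfalso; nra.
Qed.

Lemma core (R : realFieldType) (T WX WY pX pY t : R) (n k l k0 m0 : nat) :
  0 < T -> 0 <= WX -> 0 <= WY ->
  pX + k0%:R * T + WX <= pY + m0%:R * (n%:R * T) ->
  pY + m0%:R * (n%:R * T) + WY <= pX + k0%:R * T + T ->
  pX + k%:R * T <= t -> t < pX + k%:R * T + WX ->
  pY + l%:R * (n%:R * T) <= t -> t < pY + l%:R * (n%:R * T) + WY -> False.
Proof.
move=> hT hX hY h1 h2 h3 h4 h5 h6.
have E : ((l * n + k0)%N%:R - (m0 * n + k)%N%:R) * T =
   (pY + l%:R * (n%:R * T) - pX - k%:R * T) - (pY + m0%:R * (n%:R * T) - pX - k0%:R * T).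
  rewrite !natrD !natrM; ring.
have H := @nat_eq_of_bound R T (l * n + k0)%N (m0 * n + k)%N hT; rewrite E in H.
have eq : (l * n + k0)%N = (m0 * n + k)%N by apply: H; lra.
have : ((l * n + k0)%N%:R - (m0 * n + k)%N%:R) * T = 0 :> R by rewrite eq subrr mul0r.
rewrite E; lra.
Qed.

Theorem lemma7 (R : realFieldType) (P : Type)
    (phi T Rp : P -> R) (RC : R)
    (fin cfin rem : P -> nat -> R) :
  (* the topic has (at least) two distinct parents A, B *)
  (exists A B : P, A <> B) ->
  (* strictly periodic parents with positive periods *)
  (forall x : P, 0 < T x) ->
  (* each job of parent x completes (publishing its message, which also
     releases one job of C) within its response-time bound R_x *)
  (forall (x : P) (k : nat),
      release phi T x k <= fin x k <= release phi T x k + Rp x) ->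
  (* the job of C released at fin x k completes at cfin x k, within R_C *)
  (forall (x : P) (k : nat), fin x k <= cfin x k <= fin x k + RC) ->
  (* the message is removed when that job of C executes *)
  (forall (x : P) (k : nat), fin x k <= rem x k <= cfin x k) ->
  harmonic T ->
  sufficient_phase_shift phi T Rp RC ->
  (* the queue never holds more than one message *)
  forall (t : R) (x y : P) (k l : nat),
    in_queue fin rem t x k -> in_queue fin rem t y l -> x = y /\ k = l.
Proof.
move=> [A [B hAB]] hT hfin hc hrem hh hsps t x y k l.
have win : forall z j, in_queue fin rem t z j ->
    phi z + j%:R * T z <= t /\ t < phi z + j%:R * T z + (Rp z + RC).
  move=> z j [h1 h2]; have /andP[a1 a2] := hfin z j.
  have /andP[b1 b2] := hc z j; have /andP[c1 c2] := hrem z j.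
  rewrite /release in a1 a2; split; lra.
have Rp0 : forall z, 0 <= Rp z.
  move=> z; have /andP[a1 a2] := hfin z 0%N; lra.
have RC0 : 0 <= RC.
  have /andP[a1 a2] := hc A 0%N; lra.
move=> /win [hx1 hx2] /win [hy1 hy2].
have WT : forall z, Rp z + RC <= T z.
  move=> z.
  have [z' hz'] : exists z', z <> z'.
    case: (classic (z = A)) => [->|hzA]; [by exists B| by exists A].
  have [tA [tB [_ [_ [h1 h2]]]]] := hsps z z' hz'.
  have := Rp0 z'; lra.
case: (classic (x = y)) => [exy|nxy].
  subst y; split => //.
  have hTx := hT x; have := WT x => hw.
  apply: (@nat_eq_of_bound R (T x) k l hTx); lra.
exfalso.
have [n [hn|hn]] := hh x y.
- have [tA [tB [[k0 ->] [[m0 ->] [h1 h2]]]]] := hsps x y nxy.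
  rewrite /release hn in h1 h2 hy1 hy2.
  apply: (@core R (T x) (Rp x + RC) (Rp y + RC) (phi x) (phi y) t n k l k0 m0);
    rewrite ?hT //; try lra; by have := Rp0 x; have := Rp0 y; lra.
- have nyx : y <> x by move=> e; apply: nxy.
  have [tA [tB [[k0 ->] [[m0 ->] [h1 h2]]]]] := hsps y x nyx.
  rewrite /release hn in h1 h2 hx1 hx2.
  apply: (@core R (T y) (Rp y + RC) (Rp x + RC) (phi y) (phi x) t n l k k0 m0);
    rewrite ?hT //; try lra; by have := Rp0 x; have := Rp0 y; lra.
Qed.
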